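(* Let $a>1$, $n\geq1$, $C_j(n,a)=\binom{n}{j}\left(\frac{1+a}{2}\right)^{n-j}\left(\frac{1-a}{2}\right)^j$, $w_j=-i(1-\frac{2j}{n})$, and $\sigma_n(x)=\sum_{j=0}^nC_j(n,a)A_{w_j}(x)$. Then $\sigma_n\in L^2(\mathbb{R})$ and for every $z\in\mathbb{C}$, $$F_n(z,a):=\sum_{j=0}^nC_j(n,a)e^{iz(1-\frac{2j}{n})}=\pi^{-1/4}\int_{\mathbb{R}}e^{-\frac12(z^2+x^2)+\sqrt2zx}\sigma_n(x)\,dx.$$
   Context: The Bargmann kernel is $A_w(x)=\pi^{-1/4}e^{-\frac12(\bar w^2+x^2)+\sqrt2\bar wx}$ for $w\in\mathbb{C}$, $x\in\mathbb{R}$. *)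

(* Defs.v *)
From HB Require Import structures.
From mathcomp Require Import all_boot all_order all_algebra.
From mathcomp Require Import all_classical all_reals all_analysis.
From mathcomp Require Import complex.
Set Implicit Arguments. Unset Strict Implicit. Unset Printing Implicit Defensive.
Import Order.TTheory GRing.Theory Num.Theory.
Import numFieldNormedType.Exports.
Local Open Scope ring_scope.
Local Open Scope complex_scope.

Section Defs.
Variable R : realType.

Definition cexp (z : R[i]) : R[i] :=
  (expR (complex.Re z))%:C * (cos (complex.Im z) +i* sin (complex.Im z)).

Definition pim14 : R := pi `^ (- (4%:R)^-1).

Definition bargmannA (w : R[i]) (x : R) : R[i] :=
  pim14%:C * cexp (- (2%:R^-1)%:C * ((w^*) ^+ 2 + (x%:C) ^+ 2)
                   + (Num.sqrt 2%:R)%:C * (w^*) * x%:C).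

Definition Cintegrable (f : R -> R[i]) : Prop :=
  (@lebesgue_measure R).-integrable setT (fun x => (complex.Re (f x))%:E) /\
  (@lebesgue_measure R).-integrable setT (fun x => (complex.Im (f x))%:E).

Definition Cintegral (f : R -> R[i]) : R[i] :=
  (Rintegral (@lebesgue_measure R) setT (fun x => complex.Re (f x)))
  +i* (Rintegral (@lebesgue_measure R) setT (fun x => complex.Im (f x))).

Definition L2C (f : R -> R[i]) : Prop :=
  measurable_fun setT (fun x => complex.Re (f x)) /\
  measurable_fun setT (fun x => complex.Im (f x)) /\
  (\int[@lebesgue_measure R]_(x in setT)
      ((complex.Re (f x)) ^+ 2 + (complex.Im (f x)) ^+ 2)%:E < +oo)%E.

Definition Cja (n : nat) (a : R) (j : nat) : R :=
  'C(n, j)%:R * ((1 + a) / 2%:R) ^+ (n - j) * ((1 - a) / 2%:R) ^+ j.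

Definition tj (n j : nat) : R := 1 - 2%:R * j%:R / n%:R.

Definition wj (n j : nat) : R[i] := - 'i * (tj n j)%:C.

Definition sigma_n (n : nat) (a : R) (x : R) : R[i] :=
  \sum_(j < n.+1) (Cja n a j)%:C * bargmannA (wj n j) x.

Definition F_n (n : nat) (z : R[i]) (a : R) : R[i] :=
  \sum_(j < n.+1) (Cja n a j)%:C * cexp ('i * z * (tj n j)%:C).

End Defs.

(* Main.v *)
Require Import Defs.
From HB Require Import structures.
From mathcomp Require Import all_boot all_order all_algebra.
From mathcomp Require Import all_classical all_reals all_analysis.
From mathcomp Require Import complex.
From mathcomp Require Import ring lra.
From mathcomp Require Import measurable_realfun lebesgue_integral_under.
Import Order.TTheory GRing.Theory Num.Theory.
Import numFieldNormedType.Exports.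
Local Open Scope ring_scope.
Local Open Scope classical_set_scope.

Section S.
Context {R : realType}.
Local Notation mu := (@lebesgue_measure R).
Local Notation Itg f := (mu.-integrable setT (EFin \o f)).
Local Notation Int f := (Rintegral mu setT f).

Lemma cmeas (f : R -> R) : continuous f -> measurable_fun setT f.
Proof. exact: measurable_realfun.continuous_measurable_fun. Qed.

Lemma itg_dom {f g : R -> R} : continuous f -> Itg g ->
  (forall x, `|f x| <= g x) -> Itg f.
Proof.
move=> cf ig fg; apply: (le_integrable measurableT _ _ ig).
  apply/measurable_EFinP; exact (@cmeas f cf).
move=> x _; rewrite /= lee_fin; apply: (le_trans (fg x)).
exact: ler_norm.
Qed.

Lemma itgZ (k : R) {f : R -> R} : Itg f -> Itg (fun x => k * f x).
Proof.
move=> /(integrableZl measurableT k) H.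
by apply: eq_integrable H => //= x _; rewrite EFinM.
Qed.

Lemma itgD {f g : R -> R} : Itg f -> Itg g -> Itg (fun x => f x + g x).
Proof.
move=> fi gi; have := integrableD measurableT fi gi.
by apply: eq_integrable => //= x _; rewrite EFinD.
Qed.

Lemma itgB {f g : R -> R} : Itg f -> Itg g -> Itg (fun x => f x - g x).
Proof.
move=> fi gi; have := integrableB measurableT fi gi.
by apply: eq_integrable => //= x _; rewrite EFinB.
Qed.

Lemma IntZ (k : R) {f : R -> R} : Itg f -> Int (fun x => k * f x) = k * Int f.
Proof. by move=> fi; rewrite RintegralZl. Qed.

Lemma IntD {f g : R -> R} : Itg f -> Itg g -> Int (fun x => f x + g x) = Int f + Int g.
Proof. by move=> fi gi; rewrite RintegralD. Qed.

Lemma IntB {f g : R -> R} : Itg f -> Itg g -> Int (fun x => f x - g x) = Int f - Int g.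
Proof. by move=> fi gi; rewrite RintegralB. Qed.

Lemma Int_ext {f g : R -> R} : (forall x, f x = g x) -> Int f = Int g.
Proof. by move=> fg; congr Rintegral; apply/funext. Qed.

Lemma derive1_shift (c : R) : (fun x : R => x + c)^`()%classic = cst 1.
Proof.
apply/funext => x; rewrite derive1E deriveD// derive_id derive_cst addr0 //.
Qed.

Lemma shift_ge0 {G : R -> R} (c : R) : continuous G -> (forall x, 0 <= G x) ->
  (\int[mu]_x (G x)%:E = \int[mu]_x (G (x + c))%:E)%E.
Proof.
move=> cG G0.
rewrite (@increasing_ge0_integration_by_substitutionT _ (fun x => x + c) G) //.
- by apply: eq_integral => x _; rewrite derive1_shift /= mulr1.
- by move=> x y xy; rewrite ltrD2r.
- by rewrite derive1_shift; exact: cst_continuous.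
- by rewrite derive1_shift; exact: is_cvg_cst.
- by rewrite derive1_shift; exact: is_cvg_cst.
- exact: cvg_addrr_Ny.
- exact: cvg_addrr.
Qed.

Lemma itg_ge0P {G : R -> R} : continuous G -> (forall x, 0 <= G x) ->
  (\int[mu]_x (G x)%:E < +oo)%E -> Itg G.
Proof.
move=> cG G0 fin; apply/integrableP; split; first by apply/measurable_EFinP; exact (@cmeas G cG).
apply: le_lt_trans fin; rewrite le_eqVlt; apply/orP; left; apply/eqP.
by apply: eq_integral => x _; rewrite /= ger0_norm.
Qed.

Lemma shift_cont {f : R -> R} (c : R) : continuous f -> continuous (fun x => f (x + c)).
Proof.
move=> cf x; apply: (@continuous_comp _ _ _ (fun x => x + c) f).
  by apply: continuousD; [exact: cvg_id| exact: cvg_cst].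
exact: cf.
Qed.

Lemma Rshift (f Q : R -> R) (c : R) : continuous f -> continuous Q ->
  (forall x, `|f x| <= Q x) -> Itg Q ->
  Itg (fun x => f (x + c)) /\ Int f = Int (fun x => f (x + c)).
Proof.
move=> cf cQ fQ iQ.
have Q0 x : 0 <= Q x by apply: le_trans (fQ x).
have P0 x : 0 <= f x + Q x.
  by rewrite -lerBlDr sub0r; have := fQ x; rewrite ler_norml => /andP[].
have cP : continuous (fun x => f x + Q x) by move=> x; exact: (@continuousD _ _ _ f Q x (cf x) (cQ x)).
have iP : Itg (fun x => f x + Q x).
  apply: (itg_dom cP (itgZ 2 iQ)) => x; rewrite ger0_norm //.
  by rewrite mulr2n mulrDl mul1r lerD2r (le_trans (ler_norm _)).
have iQc : Itg (fun x => Q (x + c)).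
  apply: itg_ge0P => //; first exact: shift_cont.
  rewrite -(shift_ge0 c cQ Q0).
  move/integrableP: iQ => [_]; apply: le_lt_trans; rewrite le_eqVlt; apply/orP; left.
  by apply/eqP; apply: eq_integral => x _; rewrite /= ger0_norm.
have cPc := shift_cont c cP.
have iPc : Itg (fun x => f (x + c) + Q (x + c)).
  apply: (itg_dom cPc (itgZ 2 iQc)) => x; rewrite ger0_norm //.
  by rewrite mulr2n mulrDl mul1r lerD2r (le_trans (ler_norm _)).
have ifc : Itg (fun x => f (x + c)).
  apply: (itg_dom (shift_cont c cf) iQc) => x; exact: fQ.
split => //.
have -> : Int f = Int (fun x => f x + Q x) - Int Q.
  by rewrite -IntB //; apply: Int_ext => x; rewrite addrK.
have -> : Int (fun x => f (x + c)) = Int (fun x => f (x + c) + Q (x + c)) - Int (fun x => Q (x + c)).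
  by rewrite -IntB //; apply: Int_ext => x; rewrite addrK.
rewrite /Rintegral (shift_ge0 c cQ Q0).
by rewrite (shift_ge0 c cP P0).
Qed.

Lemma cont_lin (g d : R) : continuous (fun x : R => g * x + d).
Proof.
move=> x.
have h1 : {for x, continuous (fun x : R => g * x)}.
  exact (@continuousM R R (cst g) id x (@cst_continuous _ _ g x) (fun t (H : nbhs x t) => H)).
exact (continuousD h1 (@cst_continuous _ _ d x)).
Qed.
Lemma cont_quad (b : R) : continuous (fun x : R => - x ^+ 2 + b * x).
Proof.
move=> x.
have h1 : {for x, continuous (fun x : R => b * x)}.
  exact (@continuousM R R (cst b) id x (@cst_continuous _ _ b x) (fun t (H : nbhs x t) => H)).
have h2 : {for x, continuous (fun x : R => - x ^+ 2)}.
  exact (continuousN (@exprn_continuous R 2 x)).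
exact (continuousD h2 h1).
Qed.
Lemma cont_Kf (b g d : R) : continuous (fun x : R => expR (- x ^+ 2 + b * x) * cos (g * x + d)).
Proof.
move=> x.
have h1 := continuous_comp (cont_quad b x) (@continuous_expR R _).
have h2 := continuous_comp (cont_lin g d x) (@continuous_cos R _).
exact (continuousM h1 h2).
Qed.
End S.


Section S2.
Context {R : realType}.
Local Notation mu := (@lebesgue_measure R).
Local Notation Itg f := (mu.-integrable setT (EFin \o f)).
Local Notation Int f := (Rintegral mu setT f).

Definition Qf (b x : R) := expR (- x ^+ 2 + b * x).
Definition Kf (b g d x : R) := expR (- x ^+ 2 + b * x) * cos (g * x + d).
Definition K (b g d : R) := Int (Kf b g d).

Lemma itg_ext {f g : R -> R} : (forall x, f x = g x) -> Itg f -> Itg g.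
Proof. by move=> fg; apply: eq_integrable => //= x _; rewrite fg. Qed.

Lemma Qf_eq b x : Qf b x = expR (b ^+ 2 / 4) * expR (- (x - b / 2) ^+ 2).
Proof. by rewrite /Qf -expRD; congr expR; field. Qed.

Lemma cont_gs (c : R) : continuous (fun x : R => expR (- (x - c) ^+ 2)).
Proof. exact (shift_cont (- c) (@continuous_gauss_fun R)). Qed.

Lemma int_gauss_shift (c : R) :
  (\int[mu]_x (expR (- (x - c) ^+ 2))%:E = (Num.sqrt pi)%:E)%E.
Proof.
rewrite -integralT_gauss.
rewrite [RHS](shift_ge0 (- c) (@continuous_gauss_fun R) (@gauss_fun_ge0 R)).
by [].
Qed.

Lemma itg_gauss_shift (c : R) : Itg (fun x => expR (- (x - c) ^+ 2)).
Proof.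
apply: itg_ge0P; first exact: cont_gs.
  by move=> x; exact: expR_ge0.
by rewrite int_gauss_shift ltry.
Qed.

Lemma Int_gauss_shift (c : R) : Int (fun x => expR (- (x - c) ^+ 2)) = Num.sqrt pi.
Proof. by rewrite /Rintegral int_gauss_shift. Qed.

Lemma itg_Q (b : R) : Itg (Qf b).
Proof.
apply: (itg_ext _ (itgZ (expR (b ^+ 2 / 4)) (itg_gauss_shift (b / 2)))).
by move=> x; rewrite Qf_eq.
Qed.

Lemma cont_Qf (b : R) : continuous (Qf b).
Proof. by move=> x; exact: (continuous_comp (cont_quad b x) (@continuous_expR R _)). Qed.

Lemma Kf_le b g d x : `|Kf b g d x| <= Qf b x.
Proof.
rewrite /Kf normrM ger0_norm ?expR_ge0 // -[X in _ <= X]mulr1.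
by apply: ler_wpM2l; [exact: expR_ge0 | exact: cos_max].
Qed.

Lemma itg_Kf b g d : Itg (Kf b g d).
Proof. exact: (itg_dom (cont_Kf b g d) (itg_Q b) (Kf_le b g d)). Qed.

Lemma K_shift b g d : K b g d = expR (b ^+ 2 / 4) * K 0 g (d + g * b / 2).
Proof.
have [_ E] := Rshift _ _ (b / 2) (cont_Kf b g d) (cont_Qf b) (Kf_le b g d) (itg_Q b).
rewrite /K -IntZ; last exact: itg_Kf.
rewrite [LHS]E.
apply: Int_ext => x; rewrite /Kf mulrA -expRD; congr (expR _ * cos _).
  by field.
by field.
Qed.

Lemma K_phase g p : K 0 g p = cos p * K 0 g 0 + sin p * K 0 g (pi / 2).
Proof.
rewrite /K -!IntZ; try exact: itg_Kf.
rewrite -IntD; try (apply: itgZ; exact: itg_Kf).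
apply: Int_ext => x; rewrite /Kf cosDpihalf addr0 cosD.
by ring.
Qed.

Lemma K00 p : K 0 0 p = cos p * Num.sqrt pi.
Proof.
rewrite /K -(Int_gauss_shift 0) -IntZ; last exact: itg_gauss_shift.
by apply: Int_ext => x; rewrite /Kf !mul0r !addr0 subr0 add0r mulrC.
Qed.

End S2.


Section S3.
Context {R : realType}.
Local Notation mu := (@lebesgue_measure R).
Local Notation Itg f := (mu.-integrable setT (EFin \o f)).
Local Notation Int f := (Rintegral mu setT f).

Lemma diff_under (f df : R -> R -> R) (G : R -> R) (u v a : R) :
 u < a < v ->
 (forall x, u < x < v -> Itg (f x)) ->
 (forall x y, u < x < v -> is_derive x 1 (f ^~ y) (df x y)) ->
 (forall y, 0 <= G y) -> Itg G ->
 (forall x y, u < x < v -> `|df x y| <= G y) ->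
 is_derive a 1 (fun x => Int (f x)) (Int (df a)).
Proof.
move=> ua intf dfd G0 iG Gub.
have Ia : `]u, v[%classic a by rewrite /= in_itv.
have intf' : forall x, `]u, v[%classic x -> Itg (f x).
  by move=> x; rewrite /= in_itv => /intf.
have derf1 : forall x y, `]u, v[%classic x -> setT y -> derivable (f ^~ y) x 1.
  by move=> x y; rewrite /= in_itv => /(dfd _ y) [].
have Gub' : forall x y, `]u, v[%classic x -> setT y -> `|partial1of2 f x y| <= G y.
  move=> x y; rewrite /= in_itv => xI _.
  by rewrite /partial1of2 derive1E; case: (dfd _ y xI) => _ ->; exact: Gub.
have := @differentiation_under_integral R _ (measurableTypeR R) _ f setT measurableT a u v Ia intf' derf1 G G0 iG Gub'.
have := @derivable_under_integral R _ (measurableTypeR R) _ f setT measurableT a u v Ia intf' derf1 G G0 iG Gub'.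
move=> der dval; apply: DeriveDef => //.
rewrite -derive1E dval; apply: congr1; apply/funext => y.
by rewrite /partial1of2 derive1E; case: (dfd _ y ua) => _ ->.
Qed.

Lemma is_derive_lin (a c t : R) : is_derive t 1 (fun s : R => s * a + c) a.
Proof.
have H : is_derive t 1 (a *: (@idfun R) + cst c) (a *: 1 + 0) by apply: is_deriveD.
rewrite scaler1 addr0 in H.
have -> : (fun s : R => s * a + c) = (a *: (@idfun R) + cst c).
  by apply/funext => s /=; rewrite mulrC.
exact: H.
Qed.

Lemma is_derive_acomp (F F' : R -> R) (k a c t : R) :
  (forall y : R, is_derive y 1 F (F' y)) ->
  is_derive t 1 (fun s => k * F (s * a + c)) (k * (F' (t * a + c) * a)).
Proof.
move=> dF.
have h2 := @is_derive1_comp R F (fun s : R => s * a + c) t _ _ (dF (t * a + c)) (is_derive_lin a c t).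
have h3 := is_deriveZ k h2.
exact: h3.
Qed.

Definition Gd (x : R) := expR 1 * (expR (- (x - 1) ^+ 2) + expR (- (x - -1) ^+ 2)).

Lemma Gd_ge0 x : 0 <= Gd x.
Proof. by rewrite /Gd mulr_ge0 ?addr_ge0 ?expR_ge0. Qed.

Lemma itg_Gd : Itg Gd.
Proof. exact: (itgZ _ (itgD (itg_gauss_shift 1) (itg_gauss_shift (-1)))). Qed.

Lemma Gd_ub b x : `|b| <= 1 -> `|x| * expR (- x ^+ 2 + b * x) <= Gd x.
Proof.
move=> b1.
have h1 : `|x| <= expR `|x|.
  by apply: le_trans (expR_ge1Dx _); rewrite lerDr.
apply: (le_trans (ler_wpM2r (expR_ge0 _) h1)); rewrite -expRD.
have bx : b * x <= `|x|.
  apply: (le_trans (ler_norm _)); rewrite normrM -[X in _ <= X]mul1r.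
  by apply: ler_wpM2r.
rewrite /Gd mulrDr -!expRD.
have [x0|x0] := leP 0 x.
- apply: ler_wpDr; first exact: expR_ge0; rewrite ler_expR.
  rewrite ger0_norm // in bx *. nra.
- apply: ler_wpDl; first exact: expR_ge0; rewrite ler_expR.
  rewrite ltr0_norm // in bx *. nra.
Qed.

Lemma dK_g (t d : R) : is_derive t 1 (fun g => K 0 g d)
  (Int (fun x => expR (- x ^+ 2 + 0 * x) * (- sin (t * x + d) * x))).
Proof.
apply: (@diff_under (fun g => Kf 0 g d) (fun t x => expR (- x ^+ 2 + 0 * x) * (- sin (t * x + d) * x)) Gd (t - 1) (t + 1)).
- by apply/andP; split; lra.
- by move=> x _; exact: itg_Kf.
- move=> x y _.
  exact: (@is_derive_acomp cos (fun y => - sin y) _ y d x (@is_derive_cos R)).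
- exact: Gd_ge0.
- exact: itg_Gd.
- move=> x y _; have := @Gd_ub 0 y; rewrite normr0 ler01 => /(_ isT) H.
  apply: (le_trans _ H).
  rewrite normrM ger0_norm ?expR_ge0 // normrM normrN mulrC.
  by rewrite -mulrA -[X in _ <= X]mul1r ler_wpM2r //; exact: sin_max.
Qed.
End S3.


Section S4.
Context {R : realType}.
Local Notation mu := (@lebesgue_measure R).
Local Notation Itg f := (mu.-integrable setT (EFin \o f)).
Local Notation Int f := (Rintegral mu setT f).

Lemma dsq (t : R) : is_derive t 1 (fun b : R => b ^+ 2 / 4) (t / 2).
Proof.
have H := is_deriveM (is_derive_lin 1 0 t) (is_derive_lin (4^-1) 0 t).
have E : (fun b : R => b ^+ 2 / 4) = ((fun s : R => s * 1 + 0) * (fun s : R => s * 4^-1 + 0)).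
  apply/funext => b; rewrite fctE !addr0 mulr1 expr2 mulrA //.
rewrite E; apply: (is_derive_eq H).
by rewrite /GRing.scale /=; field.
Qed.

Lemma dPexp (t : R) : is_derive t 1 (fun b : R => expR (b ^+ 2 / 4)) (expR (t ^+ 2 / 4) * (t / 2)).
Proof. exact: (@is_derive1_comp R expR (fun b => b ^+ 2 / 4) t _ _ (is_derive_expR _) (dsq t)). Qed.

Lemma dK_b (g e : R) : is_derive (0 : R) 1 (fun b => K b g e)
  (Int (fun x => cos (g * x + e) * (expR (0 * x + - x ^+ 2) * x))).
Proof.
have -> : (fun b => K b g e) = (fun b => Int (fun x => cos (g * x + e) * expR (b * x + - x ^+ 2))).
  by apply/funext => b; rewrite /K; apply: Int_ext => x; rewrite /Kf mulrC [- x ^+ 2 + _]addrC.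
apply: (@diff_under R (fun b x => cos (g * x + e) * expR (b * x + - x ^+ 2))
  (fun b x => cos (g * x + e) * (expR (b * x + - x ^+ 2) * x)) Gd (-1) 1).
- by apply/andP; split; lra.
- move=> b _; apply: (itg_ext _ (itg_Kf b g e)) => x.
  by rewrite /Kf mulrC [- x ^+ 2 + _]addrC.
- move=> b y _.
  exact: (@is_derive_acomp R expR expR _ y _ b (@is_derive_expR R)).
- exact: Gd_ge0.
- exact: itg_Gd.
- move=> b y /andP[b1 b2].
  have : `|b| <= 1 by rewrite ler_norml; apply/andP; split; lra.
  move=> /(@Gd_ub R b y) H; apply: (le_trans _ H).
  rewrite normrM (normrM (expR _)) (ger0_norm (expR_ge0 _)) [b * y + _]addrC [expR _ * _]mulrC.
  by rewrite -[X in _ <= X]mul1r ler_wpM2r ?cos_max // mulr_ge0 ?expR_ge0.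
Qed.

Lemma closed_form (g e b : R) : K b g e = expR (b ^+ 2 / 4) *
  (K 0 g 0 * cos (b * (g / 2) + e) + K 0 g (pi / 2) * sin (b * (g / 2) + e)).
Proof.
rewrite K_shift K_phase.
have -> : e + g * b / 2 = b * (g / 2) + e by ring.
by congr (_ * _); ring.
Qed.

Lemma dclosed (g e : R) : is_derive (0 : R) 1 (fun b => K b g e) ((g / 2) * K 0 g (e + pi / 2)).
Proof.
have H := is_deriveM (dPexp 0) (is_deriveD
   (@is_derive_acomp R cos (fun y => - sin y) (K 0 g 0) (g / 2) e 0 (@is_derive_cos R))
   (@is_derive_acomp R sin cos (K 0 g (pi / 2)) (g / 2) e 0 (@is_derive_sin R))).
have -> : (fun b => K b g e) = ((fun b : R => expR (b ^+ 2 / 4)) *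
   ((fun s => K 0 g 0 * cos (s * (g / 2) + e)) + (fun s => K 0 g (pi / 2) * sin (s * (g / 2) + e)))).
  by apply/funext => b; rewrite closed_form fctE.
apply: (is_derive_eq H).
rewrite [in RHS]K_phase cosDpihalf sinDpihalf /GRing.scale /= expr0n /= !mul0r expR0 add0r.
by ring.
Qed.

Lemma key (g e : R) : Int (fun x => cos (g * x + e) * (expR (0 * x + - x ^+ 2) * x))
   = (g / 2) * K 0 g (e + pi / 2).
Proof.
have [_ h1] := dK_b g e; have [_ h2] := dclosed g e.
by rewrite -h1 h2.
Qed.

Lemma K_neg (t d : R) : K 0 t (d + pi) = - K 0 t d.
Proof.
rewrite /K -mulN1r -IntZ; last exact: itg_Kf.
by apply: Int_ext => x; rewrite /Kf addrA cosDpi; ring.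
Qed.

Lemma dk (t d : R) : is_derive t 1 (fun g => K 0 g d) (- (t / 2) * K 0 t d).
Proof.
apply: (is_derive_eq (dK_g t d)).
rewrite (_ : Int _ = Int (fun x => cos (t * x + (d + pi / 2)) * (expR (0 * x + - x ^+ 2) * x))); last first.
  by apply: Int_ext => x; rewrite addrA cosDpihalf [0 * x + _]addrC; ring.
rewrite key -addrA (_ : pi / 2 + pi / 2 = pi); last by field.
by rewrite K_neg; ring.
Qed.

Lemma k_closed (t d : R) : K 0 t d = Num.sqrt pi * expR (- (t ^+ 2 / 4)) * cos d.
Proof.
have hd : forall x : R, is_derive x 1 ((fun b : R => expR (b ^+ 2 / 4)) * (fun g => K 0 g d)) 0.
  move=> x; apply: (is_derive_eq (is_deriveM (dPexp x) (dk x d))).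
  by rewrite /GRing.scale /=; ring.
have := @is_derive_0_is_cst R _ t 0 hd.
rewrite !fctE K00 expr0n /= mul0r expR0 mul1r => E.
have e0 : expR (t ^+ 2 / 4) != 0 by rewrite gt_eqF ?expR_gt0.
rewrite -[LHS](mulKf e0) E expRN.
by ring.
Qed.

Lemma K_closed (b g d : R) :
  K b g d = Num.sqrt pi * expR ((b ^+ 2 - g ^+ 2) / 4) * cos (d + g * b / 2).
Proof.
rewrite K_shift k_closed.
rewrite (_ : (b ^+ 2 - g ^+ 2) / 4 = b ^+ 2 / 4 + - (g ^+ 2 / 4)); last by ring.
by rewrite expRD; ring.
Qed.
End S4.

Local Open Scope complex_scope.

Section S5.
Context {R : realType}.
Local Notation mu := (@lebesgue_measure R).
Local Notation Itg f := (mu.-integrable setT (EFin \o f)).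
Local Notation Int f := (Rintegral mu setT f).

Lemma cplx_eq (u v : R[i]) : complex.Re u = complex.Re v -> complex.Im u = complex.Im v -> u = v.
Proof. by case: u => ? ?; case: v => ? ? /= -> ->. Qed.

Lemma Re_cexp (u : R[i]) : complex.Re (cexp u) = expR (complex.Re u) * cos (complex.Im u).
Proof. by rewrite /cexp /= mul0r subr0. Qed.

Lemma Im_cexp (u : R[i]) : complex.Im (cexp u) = expR (complex.Re u) * sin (complex.Im u).
Proof. by rewrite /cexp /= mul0r addr0. Qed.

Lemma cexpD (u v : R[i]) : cexp (u + v) = cexp u * cexp v.
Proof.
rewrite /cexp; case: u => a b; case: v => c d /=.
by apply: cplx_eq => /=; rewrite expRD ?cosD ?sinD; ring.
Qed.

Lemma ReCM (r : R) (u : R[i]) : complex.Re (r%:C * u) = r * complex.Re u.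
Proof. by case: u => a b /=; rewrite mul0r subr0. Qed.

Lemma ImCM (r : R) (u : R[i]) : complex.Im (r%:C * u) = r * complex.Im u.
Proof. by case: u => a b /=; rewrite mul0r addr0. Qed.

Lemma sin_cos (t : R) : sin t = cos (t + - (pi / 2)).
Proof. by rewrite cosD cosN sinN cos_pihalf sin_pihalf; ring. Qed.

Lemma cgauss (b e : R[i]) :
  Cintegrable (fun x => cexp (- (x%:C) ^+ 2 + b * x%:C + e)) /\
  Cintegral (fun x => cexp (- (x%:C) ^+ 2 + b * x%:C + e)) =
    (Num.sqrt pi)%:C * cexp (b ^+ 2 * (4^-1)%:C + e).
Proof.
case: b => b1 b2; case: e => e1 e2.
have hRe x : complex.Re (cexp (- (x%:C) ^+ 2 + (b1 +i* b2) * x%:C + (e1 +i* e2))) =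
    expR e1 * Kf b1 b2 e2 x.
  rewrite Re_cexp /Kf /= mulrA -expRD; congr (expR _ * cos _); ring.
have hIm x : complex.Im (cexp (- (x%:C) ^+ 2 + (b1 +i* b2) * x%:C + (e1 +i* e2))) =
    expR e1 * Kf b1 b2 (e2 + - (pi / 2)) x.
  rewrite Im_cexp /Kf /= mulrA -expRD sin_cos; congr (expR _ * cos _); ring.
split.
  split.
    by apply: (itg_ext _ (itgZ (expR e1) (itg_Kf b1 b2 e2))) => x; rewrite hRe.
  by apply: (itg_ext _ (itgZ (expR e1) (itg_Kf b1 b2 (e2 + - (pi / 2))))) => x; rewrite hIm.
have Es : e2 + b2 * b1 / 2 = b1 * b2 / 2 + e2 by ring.
have hR : complex.Re ((b1 +i* b2) ^+ 2 * (4^-1)%:C + (e1 +i* e2)) = (b1 ^+ 2 - b2 ^+ 2) / 4 + e1.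
  by rewrite /=; ring.
have hI : complex.Im ((b1 +i* b2) ^+ 2 * (4^-1)%:C + (e1 +i* e2)) = b1 * b2 / 2 + e2.
  by rewrite /=; field.
apply: cplx_eq.
  rewrite [LHS]/= (Int_ext hRe) IntZ; last exact: itg_Kf.
  rewrite -/(K b1 b2 e2) K_closed ReCM Re_cexp hR hI expRD Es.
  by ring.
rewrite [LHS]/= (Int_ext hIm) IntZ; last exact: itg_Kf.
rewrite -/(K _ _ _) K_closed ImCM Im_cexp hR hI expRD sin_cos.
rewrite (_ : e2 + - (pi / 2) + b2 * b1 / 2 = b1 * b2 / 2 + e2 + - (pi / 2)); last by ring.
by ring.
Qed.
End S5.


Section S6.
Context {R : realType}.
Local Notation mu := (@lebesgue_measure R).
Local Notation Itg f := (mu.-integrable setT (EFin \o f)).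
Local Notation Int f := (Rintegral mu setT f).

Lemma Re_sum {I : Type} (r : seq I) (F : I -> R[i]) :
  complex.Re (\sum_(j <- r) F j) = \sum_(j <- r) complex.Re (F j).
Proof.
elim: r => [|j r ih]; first by rewrite !big_nil.
by rewrite !big_cons -ih; case: (F j) => ? ?; case: (\sum_(j <- r) F j).
Qed.

Lemma Im_sum {I : Type} (r : seq I) (F : I -> R[i]) :
  complex.Im (\sum_(j <- r) F j) = \sum_(j <- r) complex.Im (F j).
Proof.
elim: r => [|j r ih]; first by rewrite !big_nil.
by rewrite !big_cons -ih; case: (F j) => ? ?; case: (\sum_(j <- r) F j).
Qed.

Lemma Int_sum {I : Type} (r : seq I) (F : I -> R -> R) : (forall j, Itg (F j)) ->
  Itg (fun x => \sum_(j <- r) F j x) /\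
  Int (fun x => \sum_(j <- r) F j x) = \sum_(j <- r) Int (F j).
Proof.
move=> iF; elim: r => [|j r [ih1 ih2]].
  have i0 : Itg (fun x : R => 0 * Qf 0 x) by apply: itgZ; exact: itg_Q.
  split.
    by apply: (itg_ext _ i0) => x; rewrite big_nil mul0r.
  rewrite big_nil (Int_ext (g := fun x => 0 * Qf 0 x)); last by move=> x; rewrite big_nil mul0r.
  by rewrite IntZ ?mul0r //; exact: itg_Q.
split.
  by apply: (itg_ext _ (itgD (iF j) ih1)) => x; rewrite big_cons.
rewrite big_cons -ih2 -IntD //.
by apply: Int_ext => x; rewrite big_cons.
Qed.

Lemma cont_sum {I : Type} (r : seq I) (F : I -> R -> R) : (forall j, continuous (F j)) ->
  continuous (fun x => \sum_(j <- r) F j x).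
Proof.
move=> cF; elim: r => [|j r ih].
  by under eq_fun do rewrite big_nil; exact: cst_continuous.
under eq_fun do rewrite big_cons.
by move=> x; exact: (@continuousD _ _ _ (F j) (fun x => \sum_(j <- r) F j x) x (cF j x) (ih x)).
Qed.

Lemma cont_quad2 (a p q : R) : continuous (fun x : R => a * x ^+ 2 + p * x + q).
Proof.
move=> x.
have h1 : {for x, continuous (fun x : R => p * x)}.
  exact (@continuousM R R (cst p) id x (@cst_continuous _ _ p x) (fun t (H : nbhs x t) => H)).
have h2 : {for x, continuous (fun x : R => a * x ^+ 2)}.
  exact (@continuousM R R (cst a) _ x (@cst_continuous _ _ a x) (@exprn_continuous R 2 x)).
exact (continuousD (continuousD h2 h1) (@cst_continuous _ _ q x)).
Qed.

Lemma cont_ec (a p q r s : R) :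
  continuous (fun x : R => expR (a * x ^+ 2 + p * x + q) * cos (r * x + s)) /\
  continuous (fun x : R => expR (a * x ^+ 2 + p * x + q) * sin (r * x + s)).
Proof.
split => x.
  have h1 := continuous_comp (cont_quad2 a p q x) (@continuous_expR R _).
  have h2 := continuous_comp (cont_lin r s x) (@continuous_cos R _).
  exact (continuousM h1 h2).
have h1 := continuous_comp (cont_quad2 a p q x) (@continuous_expR R _).
have h2 := continuous_comp (cont_lin r s x) (@continuous_sin R _).
exact (continuousM h1 h2).
Qed.

Lemma cq_Re (a : R) (b e : R[i]) (x : R) :
  complex.Re (cexp (a%:C * (x%:C) ^+ 2 + b * x%:C + e)) =
  expR (a * x ^+ 2 + complex.Re b * x + complex.Re e) * cos (complex.Im b * x + complex.Im e).
Proof. rewrite Re_cexp; case: b => ? ?; case: e => ? ? /=; congr (expR _ * cos _); ring. Qed.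

Lemma cq_Im (a : R) (b e : R[i]) (x : R) :
  complex.Im (cexp (a%:C * (x%:C) ^+ 2 + b * x%:C + e)) =
  expR (a * x ^+ 2 + complex.Re b * x + complex.Re e) * sin (complex.Im b * x + complex.Im e).
Proof. rewrite Im_cexp; case: b => ? ?; case: e => ? ? /=; congr (expR _ * sin _); ring. Qed.

Lemma cont_cq (a : R) (b e : R[i]) :
  continuous (fun x : R => complex.Re (cexp (a%:C * (x%:C) ^+ 2 + b * x%:C + e))) /\
  continuous (fun x : R => complex.Im (cexp (a%:C * (x%:C) ^+ 2 + b * x%:C + e))).
Proof.
have [h1 h2] := cont_ec a (complex.Re b) (complex.Re e) (complex.Im b) (complex.Im e).
split.
  by under eq_fun do rewrite cq_Re.
by under eq_fun do rewrite cq_Im.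
Qed.

Lemma Cint_sum {I : Type} (r : seq I) (c : I -> R) (f : I -> R -> R[i]) :
  (forall j, Cintegrable (f j)) ->
  Cintegrable (fun x => \sum_(j <- r) (c j)%:C * f j x) /\
  Cintegral (fun x => \sum_(j <- r) (c j)%:C * f j x) = \sum_(j <- r) (c j)%:C * Cintegral (f j).
Proof.
move=> iF.
have [iRe ERe] := Int_sum r (fun j x => c j * complex.Re (f j x))
   (fun j => itgZ (c j) (proj1 (iF j))).
have [iIm EIm] := Int_sum r (fun j x => c j * complex.Im (f j x))
   (fun j => itgZ (c j) (proj2 (iF j))).
split.
  split.
    by apply: (itg_ext _ iRe) => x; rewrite Re_sum; apply: eq_bigr => j _; rewrite ReCM.
  by apply: (itg_ext _ iIm) => x; rewrite Im_sum; apply: eq_bigr => j _; rewrite ImCM.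
apply: cplx_eq.
  rewrite [LHS]/= Re_sum.
  rewrite (Int_ext (g := fun x => \sum_(j <- r) c j * complex.Re (f j x))); last first.
    by move=> x; rewrite Re_sum; apply: eq_bigr => j _; rewrite ReCM.
  rewrite ERe; apply: eq_bigr => j _; rewrite ReCM IntZ //; exact: (proj1 (iF j)).
rewrite [LHS]/= Im_sum.
rewrite (Int_ext (g := fun x => \sum_(j <- r) c j * complex.Im (f j x))); last first.
  by move=> x; rewrite Im_sum; apply: eq_bigr => j _; rewrite ImCM.
rewrite EIm; apply: eq_bigr => j _; rewrite ImCM IntZ //; exact: (proj2 (iF j)).
Qed.
End S6.


Section S7.
Context {R : realType}.
Local Notation mu := (@lebesgue_measure R).
Local Notation Itg f := (mu.-integrable setT (EFin \o f)).
Local Notation Int f := (Rintegral mu setT f).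

Lemma conj_wj (n j : nat) : (wj R n j : R[i])^* = 'i * (tj R n j : R)%:C.
Proof. by apply: cplx_eq; rewrite /wj /=; ring. Qed.

Definition Bq (w : R[i]) := (Num.sqrt 2%:R)%:C * w^*.
Definition Eq (w : R[i]) := - (2%:R^-1)%:C * (w^* ^+ 2).

Lemma bargmann_eq (w : R[i]) x : bargmannA w x =
  (pim14 R)%:C * cexp ((- (2%:R^-1 : R))%:C * (x%:C) ^+ 2 + Bq w * x%:C + Eq w).
Proof. by rewrite /bargmannA /Bq /Eq; congr (_ * cexp _); rewrite rmorphN /=; ring. Qed.

Lemma sigma_eq (n : nat) (a x : R) : sigma_n n a x =
  \sum_(j < n.+1) (Cja n a j * pim14 R)%:C *
     cexp ((- (2%:R^-1 : R))%:C * (x%:C) ^+ 2 + Bq (wj R n j) * x%:C + Eq (wj R n j)).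
Proof. by rewrite /sigma_n; apply: eq_bigr => j _; rewrite bargmann_eq mulrA -rmorphM. Qed.

Lemma pimE : pim14 R * pim14 R * Num.sqrt pi = 1.
Proof.
rewrite /pim14 -powRD; last by rewrite (gt_eqF (pi_gt0 _)) implybT.
rewrite (_ : - 4%:R^-1 + - 4%:R^-1 = - 2^-1 :> R); last by field.
rewrite powRN powR12_sqrt ?pi_ge0 // mulVf //.
by rewrite gt_eqF // sqrtr_gt0 pi_gt0.
Qed.

Lemma expo_eq (z c : R[i]) :
  ((Num.sqrt 2%:R)%:C * (z + c)) ^+ 2 * (4^-1 : R)%:C + - (2%:R^-1)%:C * (z ^+ 2 + c ^+ 2) = z * c.
Proof.
have s2 : ((Num.sqrt 2%:R : R)%:C) ^+ 2 = 2%:R :> R[i].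
  by rewrite -rmorphXn /= sqr_sqrtr ?ler0n // rmorph_nat.
rewrite exprMn s2 !fmorphV !rmorph_nat.
by field; rewrite ?pnatr_eq0.
Qed.

Lemma main_int (n : nat) (a : R) (z : R[i]) :
  let g := fun x : R =>
      cexp (- (2%:R^-1)%:C * (z ^+ 2 + (x%:C) ^+ 2) + (Num.sqrt 2%:R)%:C * z * x%:C)
      * sigma_n n a x in
    Cintegrable g /\ F_n n z a = (pim14 R)%:C * Cintegral g.
Proof.
move=> g.
have hh : (2%:R^-1 : R)%:C + (2%:R^-1)%:C = 1 :> R[i].
  by apply: cplx_eq => /=; [field | rewrite addr0].
pose bb (j : 'I_n.+1) := (Num.sqrt 2%:R)%:C * (z + (wj R n j)^*).
pose ee (j : 'I_n.+1) := - (2%:R^-1)%:C * (z ^+ 2 + (wj R n j)^* ^+ 2).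
pose f (j : 'I_n.+1) := fun x : R => cexp (- (x%:C) ^+ 2 + bb j * x%:C + ee j).
have gE : g = (fun x => \sum_(j < n.+1) (Cja n a j * pim14 R)%:C * f j x).
  apply/funext => x; rewrite /g sigma_eq mulr_sumr; apply: eq_bigr => j _.
  rewrite mulrCA -cexpD /f /bb /ee /Bq /Eq; congr (_ * cexp _).
  rewrite -[in RHS](mul1r (x%:C ^+ 2)) -hh rmorphN /=; ring.
have iF : forall j, Cintegrable (f j) by move=> j; exact: (proj1 (cgauss _ _)).
have [ig Eg] := Cint_sum (index_enum 'I_n.+1) (fun j => Cja n a j * pim14 R) f iF.
rewrite gE; split; first exact: ig.
rewrite Eg /F_n mulr_sumr; apply: eq_bigr => j _.
rewrite (proj2 (cgauss _ _)) expo_eq.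
have -> : z * (wj R n j)^* = 'i * z * (tj R n j)%:C.
  by move: (z) => [p q]; apply: cplx_eq; rewrite /wj /=; ring.
rewrite -[in LHS](mulr1 (Cja n a j)) -pimE !rmorphM.
by ring.
Qed.
End S7.


Section S8.
Context {R : realType}.
Local Notation mu := (@lebesgue_measure R).
Local Notation Itg f := (mu.-integrable setT (EFin \o f)).
Local Notation Int f := (Rintegral mu setT f).

Lemma contZ (k : R) {f : R -> R} : continuous f -> continuous (fun x => k * f x).
Proof. by move=> cf x; exact (@continuousM R R (cst k) f x (@cst_continuous _ _ k x) (cf x)). Qed.

Lemma cont_sq {f : R -> R} : continuous f -> continuous (fun x => f x ^+ 2).
Proof. by move=> cf x; exact: (continuous_comp (cf x) (@exprn_continuous R 2 _)). Qed.

Lemma cont_add {f g : R -> R} : continuous f -> continuous g -> continuous (fun x => f x + g x).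
Proof. by move=> cf cg x; exact (@continuousD _ _ _ f g x (cf x) (cg x)). Qed.

Lemma int_lt_oo {f : R -> R} : Itg f -> (forall x, 0 <= f x) ->
  (\int[mu]_x (f x)%:E < +oo)%E.
Proof.
move=> /integrableP[_ H] f0; apply: le_lt_trans H.
by rewrite le_eqVlt; apply/orP; left; apply/eqP; apply: eq_integral => x _; rewrite /= ger0_norm.
Qed.

Lemma ReBq (n j : nat) : complex.Re (Bq (wj R n j)) = 0.
Proof. by rewrite /Bq /wj /=; ring. Qed.

Lemma L2_sigma (n : nat) (a : R) : L2C (sigma_n n a).
Proof.
pose c (j : 'I_n.+1) := Cja n a j * pim14 R.
pose q (j : 'I_n.+1) (x : R) := cexp ((- (2%:R^-1 : R))%:C * (x%:C) ^+ 2 + Bq (wj R n j) * x%:C + Eq (wj R n j)).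
have ReE x : complex.Re (sigma_n n a x) = \sum_(j < n.+1) c j * complex.Re (q j x).
  by rewrite sigma_eq Re_sum; apply: eq_bigr => j _; rewrite ReCM.
have ImE x : complex.Im (sigma_n n a x) = \sum_(j < n.+1) c j * complex.Im (q j x).
  by rewrite sigma_eq Im_sum; apply: eq_bigr => j _; rewrite ImCM.
have cRe : continuous (fun x => complex.Re (sigma_n n a x)).
  have -> : (fun x => complex.Re (sigma_n n a x)) = (fun x => \sum_(j < n.+1) c j * complex.Re (q j x)).
    by apply/funext => x; exact: ReE.
  exact: (cont_sum (index_enum 'I_n.+1) (fun j x => c j * complex.Re (q j x))
     (fun j => contZ (c j) (proj1 (cont_cq _ _ _)))).
have cIm : continuous (fun x => complex.Im (sigma_n n a x)).
  have -> : (fun x => complex.Im (sigma_n n a x)) = (fun x => \sum_(j < n.+1) c j * complex.Im (q j x)).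
    by apply/funext => x; exact: ImE.
  exact: (cont_sum (index_enum 'I_n.+1) (fun j x => c j * complex.Im (q j x))
     (fun j => contZ (c j) (proj2 (cont_cq _ _ _)))).
pose E (x : R) := expR (- (2%:R^-1) * x ^+ 2).
pose M := \sum_(j < n.+1) `|c j| * expR (complex.Re (Eq (wj R n j))).
have bq j x : `|complex.Re (q j x)| <= expR (complex.Re (Eq (wj R n j))) * E x /\
              `|complex.Im (q j x)| <= expR (complex.Re (Eq (wj R n j))) * E x.
  have key (A B C : R) : 0 <= A -> 0 <= B -> C <= 1 -> 0 <= C -> A * B * C <= B * A.
    by move=> A0 B0 C1 C0; rewrite [B * A]mulrC -[X in _ <= X]mulr1 ler_wpM2l // mulr_ge0.
  rewrite /q cq_Re cq_Im ReBq mul0r addr0 expRD !normrM !(@ger0_norm _ (expR _)) ?expR_ge0 //.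
  by split; apply: key; rewrite ?expR_ge0 ?cos_max ?sin_max.
have bRe x : `|complex.Re (sigma_n n a x)| <= M * E x.
  rewrite ReE; apply: le_trans (ler_norm_sum _ _ _) _; rewrite /M mulr_suml.
  apply: ler_sum => j _; rewrite normrM -mulrA; apply: ler_wpM2l => //.
  exact: (proj1 (bq j x)).
have bIm x : `|complex.Im (sigma_n n a x)| <= M * E x.
  rewrite ImE; apply: le_trans (ler_norm_sum _ _ _) _; rewrite /M mulr_suml.
  apply: ler_sum => j _; rewrite normrM -mulrA; apply: ler_wpM2l => //.
  exact: (proj2 (bq j x)).
have E2 x : (M * E x) ^+ 2 = M ^+ 2 * expR (- (x - 0) ^+ 2).
  by rewrite exprMn; congr (_ * _); rewrite /E expr2 -expRD subr0; congr expR; field.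
have sq (r B : R) : `|r| <= B -> r ^+ 2 <= B ^+ 2.
  by rewrite ler_norml => /andP[h1 h2]; nra.
split; first exact (@cmeas R _ cRe).
split; first exact (@cmeas R _ cIm).
pose B x := (2 * M ^+ 2) * expR (- (x - 0) ^+ 2).
have iB : Itg B by apply: itgZ; exact: itg_gauss_shift.
apply: (le_lt_trans _ (int_lt_oo iB _)); last first.
  by move=> x; rewrite /B mulr_ge0 ?expR_ge0 // mulr_ge0 // sqr_ge0.
apply: ge0_le_integral => //.
- by move=> x _; rewrite lee_fin addr_ge0 ?sqr_ge0.
- apply/measurable_EFinP; exact (@cmeas R _ (cont_add (cont_sq cRe) (cont_sq cIm))).
- apply/measurable_EFinP; exact (@cmeas R _ (contZ (2 * M ^+ 2) (cont_gs 0))).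
- move=> x _; rewrite lee_fin /B.
  have := sq _ _ (bRe x); have := sq _ _ (bIm x); rewrite E2 => h1 h2.
  lra.
Qed.
End S8.


Local Close Scope classical_set_scope.
Local Open Scope ring_scope.
Local Open Scope complex_scope.

Theorem corollary4p4 (R : realType) (a : R) (n : nat) :
  1 < a -> (1 <= n)%N ->
  L2C (sigma_n n a) /\
  forall z : R[i],
    let g := fun x : R =>
      cexp (- (2%:R^-1)%:C * (z ^+ 2 + (x%:C) ^+ 2) + (Num.sqrt 2%:R)%:C * z * x%:C)
      * sigma_n n a x in
    Cintegrable g /\ F_n n z a = (pim14 R)%:C * Cintegral g.
Proof.
move=> _ _; split; first exact: L2_sigma.
move=> z; exact: main_int.
Qed.
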